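(* Let $\langle S,L,\tau,\ell\rangle$ be a labelled Markov chain. Robust bisimilarity $\simeq$ is a probabilistic bisimulation; in particular it is an equivalence relation, and hence $\simeq\,\subseteq\,\sim$.
   Context: Labelled Markov chain $\langle S,L,\tau,\ell\rangle$: finite state set $S$, finite label set $L$, $\tau:S\to\mathcal{D}(S)$, $\ell:S\to L$, with $|\ell(S)|\ge2$. $\Omega(\mu,\nu)$ = couplings of $\mu,\nu$ (distributions on $S\times S$ with marginals $\mu,\nu$). A probabilistic bisimulation is an equivalence relation $R\subseteq S\times S$ such that for all $(s,t)\in R$, $\ell(s)=\ell(t)$ and there is $\omega\in\Omega(\tau(s),\tau(t))$ with $\mathrm{support}(\omega)\subseteq R$; $s\sim t$ iff $(s,t)\in R$ for some bisimulation $R$. Let $S^2_\Delta=\{(s,s)\}$, $S^2_1=\{(s,t)\mid\ell(s)\ne\ell(t)\}$, $S^2_{0?}=(S\times S)\setminus(S^2_\Delta\cup S^2_1)$. A policy is $P:S\times S\to\mathcal{D}(S\times S)$ with $P(s,t)\in\Omega(\tau(s),\tau(t))$ for $(s,t)\notin S^2_1$ and $P(s,t)$ the point mass at $(s,t)$ for $(s,t)\in S^2_1$; $\mathcal{P}$ is the set of policies and each $P$ induces a Markov chain $\langle S\times S,P\rangle$. Robust bisimilarity: $s\simeq t$ iff there is $P\in\mathcal{P}$ such that $(s,t)$ reaches $S^2_\Delta$ with probability $1$ in $\langle S\times S,P\rangle$. *)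

(* Defs.v *)
From mathcomp Require Import all_boot all_order all_algebra.
From mathcomp Require Import reals.
Set Implicit Arguments. Unset Strict Implicit. Unset Printing Implicit Defensive.
Import Order.TTheory GRing.Theory Num.Theory.
Local Open Scope ring_scope.

Section LMC.
Variables (R : realType) (S L : finType).

Definition is_distr (T : finType) (mu : T -> R) : Prop :=
  (forall x, 0 <= mu x) /\ \sum_(x : T) mu x = 1.

Definition is_LMC (tau : S -> S -> R) (lab : S -> L) : Prop :=
  (forall s, is_distr (tau s)) /\ exists s t, lab s != lab t.

Definition coupling (mu nu : S -> R) (omega : S * S -> R) : Prop :=
  is_distr omega /\
  (forall s, \sum_(t : S) omega (s, t) = mu s) /\
  (forall t, \sum_(s : S) omega (s, t) = nu t).

Definition support_in (omega : S * S -> R) (Rel : S -> S -> Prop) : Prop :=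
  forall s t, omega (s, t) != 0 -> Rel s t.

Definition is_equivalence (Rel : S -> S -> Prop) : Prop :=
  (forall s, Rel s s) /\ (forall s t, Rel s t -> Rel t s) /\
  (forall s t u, Rel s t -> Rel t u -> Rel s u).

Definition prob_bisimulation (tau : S -> S -> R) (lab : S -> L)
    (Rel : S -> S -> Prop) : Prop :=
  is_equivalence Rel /\
  forall s t, Rel s t ->
    lab s = lab t /\ exists omega, coupling (tau s) (tau t) omega /\ support_in omega Rel.

Definition bisimilar (tau : S -> S -> R) (lab : S -> L) (s t : S) : Prop :=
  exists Rel, prob_bisimulation tau lab Rel /\ Rel s t.

Definition is_policy (tau : S -> S -> R) (lab : S -> L)
    (P : S * S -> S * S -> R) : Prop :=
  forall x : S * S,
    if lab x.1 != lab x.2 then (forall y, P x y = (y == x)%:R)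
    else coupling (tau x.1) (tau x.2) (P x).

Fixpoint reach_diag_within (P : S * S -> S * S -> R) (n : nat) (x : S * S) : R :=
  if x.1 == x.2 then 1 else
  match n with
  | 0 => 0
  | n'.+1 => \sum_(y : S * S) P x y * reach_diag_within P n' y
  end.

(* x reaches S^2_Delta with probability 1: the probability of the event
   "eventually in S^2_Delta" is the limit (supremum) of the bounded-step
   reachability probabilities, and it equals 1. *)
Definition reaches_diag_as (P : S * S -> S * S -> R) (x : S * S) : Prop :=
  forall eps : R, 0 < eps -> exists n, 1 - eps < reach_diag_within P n x.

Definition robust_bisimilar (tau : S -> S -> R) (lab : S -> L) (s t : S) : Prop :=
  exists P, is_policy tau lab P /\ reaches_diag_as P (s, t).

End LMC.

(* Main.v *)
Require Import Defs.
From mathcomp Require Import all_boot all_order all_algebra.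
From mathcomp Require Import reals.
From mathcomp Require Import ring lra zify.
From Stdlib Require Import ClassicalEpsilon Classical.
Import Order.TTheory GRing.Theory Num.Theory.

Section Proofs.
Local Open Scope ring_scope.
Variables (R : realType) (S L : finType) (tau : S -> S -> R) (lab : S -> L).
Hypothesis Htau : forall s, is_distr (tau s).

Lemma distr_le1 (T : finType) (mu : T -> R) x : is_distr mu -> mu x <= 1.
Proof.
move=> [H0 H1]; rewrite -H1 (bigD1 x) //= ler_wpDr //.
by apply: sumr_ge0 => i _.
Qed.

Lemma sum_pair (F : S * S -> R) :
  \sum_(p : S * S) F p = \sum_(a : S) \sum_(b : S) F (a, b).
Proof. by rewrite pair_bigA /=; apply: eq_bigr => -[]. Qed.

Lemma mk_coupling (mu nu : S -> R) (w : S * S -> R) :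
  (forall y, 0 <= w y) -> (forall s, \sum_t w (s, t) = mu s) ->
  (forall t, \sum_s w (s, t) = nu t) -> is_distr mu -> coupling mu nu w.
Proof.
move=> H0 Hr Hc [_ Hmu]; split; last by split.
split=> //; rewrite sum_pair -Hmu; apply: eq_bigr => a _; exact: Hr.
Qed.

Lemma coupling_ge0 {mu nu : S -> R} {w : S * S -> R} : coupling mu nu w -> forall y, 0 <= w y.
Proof. by case=> -[]. Qed.

Lemma coupling_le_l {mu nu : S -> R} {w : S * S -> R} a b : coupling mu nu w -> w (a, b) <= mu a.
Proof.
move=> [[H0 _] [Hr _]]; rewrite -Hr (bigD1 b) //= ler_wpDr //.
by apply: sumr_ge0.
Qed.

Lemma coupling_le_r {mu nu : S -> R} {w : S * S -> R} a b : coupling mu nu w -> w (a, b) <= nu b.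
Proof.
move=> [[H0 _] [_ Hc]]; rewrite -Hc (bigD1 a) //= ler_wpDr //.
by apply: sumr_ge0.
Qed.

Definition prodc (s t : S) (p : S * S) := tau s p.1 * tau t p.2.

Lemma prodc_coupling s t : coupling (tau s) (tau t) (prodc s t).
Proof.
have [Hs1 Hs2] := Htau s; have [Ht1 Ht2] := Htau t.
apply: mk_coupling => //.
- by move=> y; rewrite /prodc mulr_ge0.
- by move=> a; rewrite /prodc /= -mulr_sumr Ht2 mulr1.
- by move=> b; rewrite /prodc /= -mulr_suml Hs2 mul1r.
Qed.

Definition diagc (s : S) (p : S * S) := (p.1 == p.2)%:R * tau s p.1.

Lemma diagc_coupling s : coupling (tau s) (tau s) (diagc s).
Proof.
have [Hs1 Hs2] := Htau s.
apply: mk_coupling => //.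
- by move=> y; rewrite /diagc mulr_ge0.
- move=> a; rewrite /diagc /= (bigD1 a) //= eqxx mul1r big1 ?addr0 //.
  by move=> b /negbTE; rewrite eq_sym => ->; rewrite mul0r.
- move=> b; rewrite /diagc /= (bigD1 b) //= eqxx mul1r big1 ?addr0 //.
  by move=> a /negbTE => ->; rewrite mul0r.
Qed.

Lemma diagc_support s (X : S -> S -> Prop) :
  (forall a, X a a) -> support_in (diagc s) X.
Proof.
move=> HX a b; rewrite /diagc /=; have [-> _|ne] := eqVneq a b; first exact: HX.
by rewrite mul0r eqxx.
Qed.

Definition swapc (w : S * S -> R) (p : S * S) := w (p.2, p.1).

Lemma swapc_coupling {mu nu : S -> R} {w : S * S -> R} : coupling mu nu w -> coupling nu mu (swapc w).
Proof.
move=> [[H0 H1] [Hr Hc]]; split; last by split.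
split; first by move=> y; exact: H0.
rewrite sum_pair exchange_big /= -H1 sum_pair; apply: eq_bigr => a _.
by apply: eq_bigr.
Qed.

Definition gluec (t : S) (w1 w2 : S * S -> R) (p : S * S) :=
  \sum_(b : S) w1 (p.1, b) * w2 (b, p.2) / tau t b.

Lemma gluec_coupling s t u w1 w2 :
  coupling (tau s) (tau t) w1 -> coupling (tau t) (tau u) w2 ->
  coupling (tau s) (tau u) (gluec t w1 w2).
Proof.
move=> C1 C2.
have g1 := coupling_ge0 C1; have g2 := coupling_ge0 C2.
have Ht0 := (Htau t).1.
apply: mk_coupling; last exact: Htau.
- move=> y; apply: sumr_ge0 => b _; apply: divr_ge0 => //; exact: mulr_ge0.
- move=> a; rewrite /gluec /= exchange_big /= -C1.2.1.
  apply: eq_bigr => b _.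
  have -> : \sum_i w1 (a, b) * w2 (b, i) / tau t b
          = w1 (a, b) / tau t b * \sum_i w2 (b, i).
    by rewrite mulr_sumr; apply: eq_bigr => i _; rewrite mulrAC -mulrA.
  rewrite C2.2.1.
  have [e|nz] := eqVneq (tau t b) 0.
    have := coupling_le_r a b C1; rewrite e => le.
    have h0 : w1 (a, b) = 0 by apply/le_anti; rewrite le g1.
    by rewrite h0 !mul0r.
  by rewrite divfK.
- move=> c; rewrite /gluec /= exchange_big /= -C2.2.2.
  apply: eq_bigr => b _.
  have -> : \sum_i w1 (i, b) * w2 (b, c) / tau t b
          = (\sum_i w1 (i, b)) * (w2 (b, c) / tau t b).
    by rewrite mulr_suml; apply: eq_bigr => i _; rewrite mulrA.
  rewrite C1.2.2.
  have [e|nz] := eqVneq (tau t b) 0.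
    have := coupling_le_l b c C2; rewrite e => le.
    have h0 : w2 (b, c) = 0 by apply/le_anti; rewrite le g2.
    by rewrite h0 !(mul0r, mulr0).
  by rewrite mulrC divfK.
Qed.


Lemma gluec_support s t u w1 w2 a c :
  coupling (tau s) (tau t) w1 -> coupling (tau t) (tau u) w2 ->
  gluec t w1 w2 (a, c) != 0 -> exists b, w1 (a, b) != 0 /\ w2 (b, c) != 0.
Proof.
move=> C1 C2 nz; apply: NNPP => hn; move/eqP: nz; apply.
rewrite /gluec big1 //= => b _.
have [h|h] := eqVneq (w1 (a, b)) 0; first by rewrite h !mul0r.
have [h'|h'] := eqVneq (w2 (b, c)) 0; first by rewrite h' mulr0 mul0r.
by exfalso; apply: hn; exists b; split.
Qed.

Lemma gluec_pos s t u w1 w2 a b c :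
  coupling (tau s) (tau t) w1 -> coupling (tau t) (tau u) w2 ->
  w1 (a, b) != 0 -> w2 (b, c) != 0 -> gluec t w1 w2 (a, c) != 0.
Proof.
move=> C1 C2 n1 n2.
have g1 := coupling_ge0 C1; have g2 := coupling_ge0 C2.
have p1 : 0 < w1 (a, b) by rewrite lt0r n1 g1.
have p2 : 0 < w2 (b, c) by rewrite lt0r n2 g2.
have pt : 0 < tau t b by apply: lt_le_trans p1 (coupling_le_r a b C1).
apply: lt0r_neq0; rewrite /gluec (bigD1 b) //= ltr_wpDr //.
  apply: sumr_ge0 => i _; apply: divr_ge0 => //; last exact: (Htau t).1.
  exact: mulr_ge0.
by apply: divr_gt0 => //; apply: mulr_gt0.
Qed.

Definition pdistr (P : S * S -> S * S -> R) := forall x, is_distr (P x).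

Lemma policy_pdistr {P} : is_policy tau lab P -> pdistr P.
Proof.
move=> HP x; have := HP x; case: ifP => _.
  move=> H; split; first by move=> y; rewrite H ler0n.
  rewrite (bigD1 x) //= H eqxx big1 ?addr0 // => y /negbTE ny.
  by rewrite H ny.
by case.
Qed.

Notation reach := (@reach_diag_within R S).

Lemma reach_diag P n x : x.1 == x.2 -> reach P n x = 1.
Proof. by case: n => [|n] /= ->. Qed.

Lemma reach_bounds P n x : pdistr P -> 0 <= reach P n x <= 1.
Proof.
move=> HP; elim: n x => [|n IH] x /=.
  by case: ifP => _; rewrite ?ler01 ?lexx.
case: ifP => _; first by rewrite ler01 lexx.
have [H0 H1] := HP x.
apply/andP; split.
  apply: sumr_ge0 => y _; apply: mulr_ge0 => //; exact: (andP (IH y)).1.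
rewrite -H1; apply: ler_sum => y _.
by rewrite -{2}(mulr1 (P x y)); apply: ler_wpM2l => //; exact: (andP (IH y)).2.
Qed.

Lemma reach_difflab P n x : is_policy tau lab P -> lab x.1 != lab x.2 ->
  reach P n x = 0.
Proof.
move=> HP hl.
have nd : (x.1 == x.2) = false.
  by apply/negbTE; apply: contra hl => /eqP ->.
have Hx := HP x; rewrite hl in Hx.
elim: n => [|n IH] /=; rewrite nd //.
rewrite (bigD1 x) //= Hx eqxx mul1r IH add0r big1 // => y /negbTE ny.
by rewrite Hx ny mul0r.
Qed.

Fixpoint rw (P : S * S -> S * S -> R) (h : S * S -> R) (n : nat) (x : S * S) : R :=
  if x.1 == x.2 then 1 else
  match n with
  | 0 => h x
  | n'.+1 => \sum_(y : S * S) P x y * rw P h n' y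
  end.

Lemma reach_add P n m x : reach P (n + m) x = rw P (reach P m) n x.
Proof.
elim: n x => [|n IH] x /=.
  by case: ifP => // d; rewrite reach_diag.
by case: ifP => // _; apply: eq_bigr => y _; rewrite IH.
Qed.

Lemma geom (X : S * S -> Prop) P (h : S * S -> R) (e : R) :
  (forall x, X x -> x.1 != x.2 -> is_distr (P x) /\ forall y, P x y != 0 -> X y) ->
  0 <= e -> (forall y, X y -> 1 - e <= h y) ->
  forall a x, X x -> 1 - rw P h a x <= e * (1 - reach P a x).
Proof.
move=> HX e0 Hh; elim=> [|a IH] x Xx /=.
  case: ifP => _; first by rewrite subrr mulr0.
  by rewrite subr0 mulr1 lerBlDl -lerBlDr; exact: Hh.
case: ifP => d; first by rewrite subrr mulr0.
have [[H0 H1] Hs] := HX x Xx (negbT d).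
rewrite -H1 -!sumrB mulr_sumr; apply: ler_sum => y _.
have [z|nz] := eqVneq (P x y) 0; first by rewrite z !mul0r subrr mulr0.
have E (u v : R) : u - u * v = u * (1 - v) by rewrite mulrBr mulr1.
rewrite !E mulrCA; apply: ler_wpM2l => //.
exact: IH (Hs y nz).
Qed.


Inductive attrn (X : S -> S -> Prop) : nat -> S -> S -> Prop :=
| an_diag n s : attrn X n s s
| an_step n s t (w : S * S -> R) y1 y2 :
    lab s = lab t -> coupling (tau s) (tau t) w -> support_in w X ->
    w (y1, y2) != 0 -> attrn X n y1 y2 -> attrn X n.+1 s t.
Arguments an_diag {X n s}.
Arguments an_step {X n s t w y1 y2}.

Lemma attrn_mono X n m s t : attrn X n s t -> (n <= m)%N -> attrn X m s t.
Proof.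
move=> H; elim: H m => [n' s'|n' s' t' w y1 y2 hl C Hs nz _ IH] m le.
  exact: an_diag.
case: m le => [|m] //= le.
exact: (an_step hl C Hs nz (IH m le)).
Qed.

Lemma attrn0 X s t : attrn X 0 s t -> s = t.
Proof. by move=> H; inversion H. Qed.

Lemma attrn_lab X n s t : attrn X n s t -> lab s = lab t.
Proof. by case. Qed.

Lemma attrn_rel X Y n s t : (forall a b, X a b -> Y a b) ->
  attrn X n s t -> attrn Y n s t.
Proof.
move=> XY; elim=> [n' s'|n' s' t' w y1 y2 hl C Hs nz _ IH]; first exact: an_diag.
by apply: (an_step hl C _ nz IH) => a b /Hs /XY.
Qed.

Lemma attrn_inv X n s t : attrn X n.+1 s t -> s = t \/
  exists w y1 y2, [/\ lab s = lab t, coupling (tau s) (tau t) w,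
    support_in w X, w (y1, y2) != 0 & attrn X n y1 y2].
Proof.
move=> H; inversion H; subst; first by left.
by right; exists w, y1, y2.
Qed.

Lemma attrn_min X n s t : attrn X n s t ->
  exists m, attrn X m s t /\ forall k, attrn X k s t -> (m <= k)%N.
Proof.
move=> H; apply: NNPP => hn.
suff: forall N k, (k <= N)%N -> ~ attrn X k s t by move/(_ n n (leqnn n)).
elim=> [|N IH] k le Hk; apply: hn; exists k; split => // k' Hk';
  apply: NNPP => /negP; rewrite -ltnNge => lt.
  lia.
by apply: (IH k') => //; lia.
Qed.

Arguments attrn_mono {X n m s t}.
Arguments attrn0 {X s t}.
Arguments attrn_lab {X n s t}.
Arguments attrn_inv {X n s t}.
Arguments attrn_min {X n s t}.
Arguments attrn_rel {X Y n s t}.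

Section Sound.
Variable X : S -> S -> Prop.
Hypothesis HX : forall s t, X s t -> exists n, attrn X n s t.

Definition spec (x : S * S) (w : S * S -> R) :=
  coupling (tau x.1) (tau x.2) w /\
  (X x.1 x.2 -> x.1 != x.2 -> support_in w X /\
     forall n, attrn X n.+1 x.1 x.2 -> exists y, w y != 0 /\ attrn X n y.1 y.2).

Lemma spec_ex x : exists w, spec x w.
Proof.
case: (classic (X x.1 x.2 /\ x.1 != x.2)) => [[Xx nd]|nX]; last first.
  exists (prodc x.1 x.2); split; first exact: prodc_coupling.
  by move=> Xx nd; exfalso; apply: nX.
have [n Hn] := HX _ _ Xx.
have [[|m] [Hm Hmin]] := attrn_min Hn.
  by move/eqP: nd; case; exact: attrn0 Hm.
case: (attrn_inv Hm) => [e|[w [y1 [y2 [hl C Hs nz Hy]]]]].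
  by move/eqP: nd; case.
exists w; split => // _ _; split => // k Hk.
exists (y1, y2); split => //=.
by apply: attrn_mono Hy _; have := Hmin _ Hk.
Qed.

Definition chosen x := proj1_sig (constructive_indefinite_description _ (spec_ex x)).

Lemma chosen_spec x : spec x (chosen x).
Proof. exact: (proj2_sig (constructive_indefinite_description _ (spec_ex x))). Qed.

Definition Pol (x : S * S) : S * S -> R :=
  if lab x.1 != lab x.2 then (fun y => (y == x)%:R) else chosen x.

Lemma Pol_policy : is_policy tau lab Pol.
Proof.
move=> x; rewrite /Pol; have [h|h] := boolP (lab x.1 != lab x.2).
  by [].
exact: (chosen_spec x).1.
Qed.

Lemma Pol_X {x} : X x.1 x.2 -> x.1 != x.2 ->
  is_distr (Pol x) /\ forall y, Pol x y != 0 -> X y.1 y.2.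
Proof.
move=> Xx nd; have [n Hn] := HX _ _ Xx.
have hl := attrn_lab Hn.
rewrite /Pol hl eqxx /=.
have [C H] := chosen_spec x; have [Hs _] := H Xx nd.
split; first exact: C.1.
by case=> a b /Hs.
Qed.

Lemma Pol_rank {x n} : X x.1 x.2 -> attrn X n.+1 x.1 x.2 -> x.1 != x.2 ->
  exists y, Pol x y != 0 /\ attrn X n y.1 y.2.
Proof.
move=> Xx Hn nd; have hl := attrn_lab Hn.
rewrite /Pol hl eqxx /=.
have [C H] := chosen_spec x; have [_ Hr] := H Xx nd.
exact: Hr.
Qed.

Definition delta := \prod_(p : (S * S) * (S * S))
   (if Pol p.1 p.2 != 0 then Pol p.1 p.2 else 1).

Lemma delta_prop : 0 < delta /\ delta <= 1 /\
  forall x y, Pol x y != 0 -> delta <= Pol x y.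
Proof.
have HP := policy_pdistr Pol_policy.
have Hf : forall p : (S * S) * (S * S),
   0 < (if Pol p.1 p.2 != 0 then Pol p.1 p.2 else 1) <=1.
  move=> [x y] /=; case: ifP => nz; last by rewrite ltr01 lexx.
  by rewrite lt0r nz (HP x).1 /= distr_le1.
split; first by apply: prodr_gt0 => p _; exact: (andP (Hf p)).1.
split.
  apply: prodr_ile1 => p _; have /andP[h1 h2] := Hf p.
  by rewrite h2 ltW.
move=> x y nz; rewrite /delta (bigD1 (x, y)) //= nz.
apply: ler_piMr; first by rewrite ((HP x).1).
apply: prodr_ile1 => p _; have /andP[h1 h2] := Hf p.
by rewrite h2 ltW.
Qed.

Notation reachP := (reach_diag_within Pol).

Lemma Pol_lower n x : X x.1 x.2 -> attrn X n x.1 x.2 -> delta ^+ n <= reachP n x.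
Proof.
have [d0 [d1 dle]] := delta_prop.
have HP := policy_pdistr Pol_policy.
elim: n x => [|n IH] x Xx Hn.
  by rewrite reach_diag ?expr0 //; apply/eqP; exact: attrn0 Hn.
have [d|nd] := boolP (x.1 == x.2).
  by rewrite reach_diag // exprn_ile1 // ltW.
have [y [nz Hy]] := Pol_rank Xx Hn nd.
have Xy := (Pol_X Xx nd).2 y nz.
rewrite /= (negbTE nd) (bigD1 y) //= exprS.
apply: ler_wpDr.
  apply: sumr_ge0 => z _; apply: mulr_ge0; first exact: (HP x).1.
  exact: (andP (reach_bounds _ n z HP)).1.
apply: ler_pM; [exact: ltW|exact: exprn_ge0 (ltW d0)|exact: dle|exact: IH].
Qed.

Lemma uniform_N : exists N, forall x, X x.1 x.2 -> attrn X N x.1 x.2.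
Proof.
suff: forall r : seq (S * S), exists N, forall x, x \in r -> X x.1 x.2 -> attrn X N x.1 x.2.
  by case/(_ (enum (@predT (S * S)%type))) => N HN; exists N => x; apply: HN; rewrite mem_enum.
elim=> [|x r [N IH]]; first by exists 0%N.
case: (classic (X x.1 x.2)) => [Xx|nX].
  have [n Hn] := HX _ _ Xx; exists (maxn n N) => z; rewrite inE => /orP[/eqP->|zr] Xz.
    by apply: attrn_mono Hn _; rewrite leq_maxl.
  by apply: attrn_mono (IH z zr Xz) _; rewrite leq_maxr.
exists N => z; rewrite inE => /orP[/eqP->|zr] Xz; first by exfalso.
exact: IH.
Qed.

Lemma sound x : X x.1 x.2 -> reaches_diag_as Pol x.
Proof.
have [d0 [d1 dle]] := delta_prop.
have HP := policy_pdistr Pol_policy.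
have [N HN] := uniform_N.
set q := delta ^+ N.
have q0 : 0 < q by exact: exprn_gt0.
have q1 : q <= 1 by apply: exprn_ile1 => //; exact: ltW.
have HqN : forall z, X z.1 z.2 -> q <= reachP N z.
  by move=> z Xz; apply: Pol_lower => //; exact: HN.
have Hk : forall k z, X z.1 z.2 -> 1 - (1 - q) ^+ k <= reachP (k * N) z.
  elim=> [|k IH] z Xz.
    by rewrite expr0 subrr mul0n; exact: (andP (reach_bounds _ 0 z HP)).1.
  rewrite mulSn reach_add.
  have e0 : 0 <= (1 - q) ^+ k by apply: exprn_ge0; lra.
  have := @geom (fun y => X y.1 y.2) Pol (reachP (k * N)) ((1 - q) ^+ k)
     (fun y Xy nd => Pol_X Xy nd) e0 (fun y Xy => IH y Xy) N z Xz.
  have := HqN z Xz; rewrite exprS.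
  set e := (1 - q) ^+ k; set r := reachP N z; set w := rw _ _ _ _ => h2 h1.
  have h3 : e * (1 - r) <= e * (1 - q) by apply: ler_wpM2l => //; lra.
  lra.
have Hb : forall k : nat, (1 - q) ^+ k * (1 + k%:R * q) <= 1.
  elim=> [|k IH]; first by rewrite expr0 mul1r mul0r addr0.
  rewrite exprSr -mulrA; apply: le_trans IH; apply: ler_wpM2l.
    by apply: exprn_ge0; lra.
  have K0 : 0 <= k%:R :> R by [].
  have : 0 <= (k%:R + 1) * (q * q) by apply: mulr_ge0; [lra| apply: mulr_ge0; lra].
  rewrite -addn1 natrD; nra.
move=> Xx eps eps0.
have pos : 0 <= (eps * q)^-1 by rewrite invr_ge0; apply: mulr_ge0; lra.
have := archi_boundP pos; set k := Num.Def.archi_bound _ => hk.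
exists (k * N)%N.
apply: lt_le_trans (Hk k x Xx).
suff : (1 - q) ^+ k < eps by lra.
have kq : 1 < eps * (1 + k%:R * q).
  have : 1 < eps * q * k%:R.
    by rewrite -ltr_pdivrMl ?mulr1 //; apply: mulr_gt0.
  have : 0 < eps by [].
  nra.
have pk : 0 < 1 + k%:R * q by have : 0 <= k%:R :> R by []; nra.
rewrite -(ltr_pM2r pk); apply: le_lt_trans (Hb k) _; lra.
Qed.

End Sound.


Lemma sound_rb X : (forall s t, X s t -> exists n, attrn X n s t) ->
  forall s t, X s t -> robust_bisimilar tau lab s t.
Proof.
move=> HX s t Xst; exists (@Pol X HX); split; first exact: Pol_policy.
exact: (@sound X HX (s, t)).
Qed.

Notation W := (robust_bisimilar tau lab).

Lemma W_refl s : W s s.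
Proof.
apply: (@sound_rb (fun a b => a = b)) => // a b ->; exists 0%N; exact: an_diag.
Qed.

Lemma succ_bound P x y n : pdistr P -> x.1 != x.2 ->
  P x y * (1 - reach P n.-1 y) <= 1 - reach P n x.
Proof.
move=> HP nd; have [H0 H1] := HP x.
case: n => [|n] /=.
  have [ry0 ry1] := andP (reach_bounds P 0 y HP).
  rewrite (negbTE nd) subr0; have := @distr_le1 _ (P x) y (HP x); have := H0 y.
  by case: ifP => _ ; rewrite ?subrr ?mulr0 ?subr0 ?mulr1 // => _ _; rewrite ler01.
have E : \sum_z P x z * (1 - reach P n z) = 1 - \sum_z P x z * reach P n z.
  have E' : forall z, P x z * (1 - reach P n z) = P x z - P x z * reach P n z.
    by move=> z; rewrite mulrBr mulr1.
  by rewrite (eq_bigr _ (fun z _ => E' z)) sumrB H1.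
rewrite (negbTE nd) -E (bigD1 y) //= ler_wpDr //.
apply: sumr_ge0 => z _.
apply: mulr_ge0 => //; have := reach_bounds P n z HP; case/andP => _ h; lra.
Qed.

Lemma W_succ {P x y} : is_policy tau lab P -> reaches_diag_as P x -> x.1 != x.2 ->
  P x y != 0 -> reaches_diag_as P y.
Proof.
move=> HPol Hx nd nz eps eps0.
have HP := policy_pdistr HPol.
have p0 : 0 < P x y by rewrite lt0r nz (HP x).1.
have [n Hn] := Hx (eps * P x y) (mulr_gt0 eps0 p0).
exists n.-1.
have := succ_bound P x y n HP nd.
move=> h; have : P x y * (1 - reach P n.-1 y) < P x y * eps by lra.
rewrite ltr_pM2l //; lra.
Qed.

Lemma W_lab {P s t} : is_policy tau lab P -> reaches_diag_as P (s, t) -> lab s = lab t.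
Proof.
move=> HPol Hx; apply/eqP; apply: NNPP => /negP hl.
have [n Hn] := Hx 1 ltr01.
by move: Hn; rewrite (reach_difflab P n (s, t) HPol hl) subrr ltxx.
Qed.

Lemma W_step {s t} : W s t ->
  lab s = lab t /\ exists w, coupling (tau s) (tau t) w /\ support_in w W.
Proof.
case=> P [HPol Hx]; have hl := W_lab HPol Hx; split => //.
have [e|nd] := eqVneq s t.
  rewrite -e; exists (diagc s); split; first exact: diagc_coupling.
  exact: diagc_support W_refl.
exists (P (s, t)); split.
  by have := HPol (s, t); rewrite /= hl eqxx.
move=> a b nz; exists P; split => //.
exact: (W_succ HPol Hx nd nz).
Qed.

Lemma W_attr {s t} : W s t -> exists n, attrn W n s t.
Proof.
case=> P [HPol Hx].
have HP := policy_pdistr HPol.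
have [n Hn] := Hx 1 ltr01; rewrite subrr in Hn.
exists n.
suff: forall n x, reaches_diag_as P x -> 0 < reach P n x -> attrn W n x.1 x.2.
  by move/(_ n (s, t) Hx Hn).
elim=> [|m IH] x Rx.
  by rewrite /=; case: ifP => [/eqP ->|]; [move=> _; exact: an_diag|rewrite ltxx].
rewrite /=; case: ifP => [/eqP -> _|nd Hpos]; first exact: an_diag.
have [z Hz] : exists z, 0 < P x z * reach P m z.
  apply: NNPP => hn; move: Hpos; rewrite ltNge => /negP; apply.
  apply: sumr_le0 => z _; rewrite leNgt; apply/negP => hz; apply: hn; exists z.
  exact: hz.
have Pz : P x z != 0.
  by apply/eqP => e; move: Hz; rewrite e mul0r ltxx.
have rz : 0 < reach P m z.
  have p0 : 0 < P x z by rewrite lt0r Pz (HP x).1.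
  by rewrite pmulr_rgt0 in Hz.
have nd' : x.1 != x.2 by rewrite nd.
have hl : lab x.1 = lab x.2 by case: x Rx {Hpos Hz Pz rz nd nd'} => a b; exact: W_lab HPol.
have C : coupling (tau x.1) (tau x.2) (P x) by have := HPol x; rewrite hl eqxx.
case: z Hz Pz rz => a b Hz Pz rz.
apply: (an_step hl C _ Pz); last exact: (IH (a, b) (W_succ HPol Rx nd' Pz) rz).
move=> c d nz; exists P; split => //; exact: (W_succ HPol Rx nd' nz).
Qed.


Lemma attrn_flip X n a b : attrn X n a b -> attrn (fun s t => X t s) n b a.
Proof.
elim=> [n' s'|n' s' t' w y1 y2 hl C Hs nz _ IH]; first exact: an_diag.
apply: (an_step (esym hl) (swapc_coupling C) _ _ IH).
  by move=> c d; rewrite /swapc /= => /Hs.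
by rewrite /swapc.
Qed.

Lemma W_sym s t : W s t -> W t s.
Proof.
move=> Wst; apply: (@sound_rb (fun a b => W b a)) => // a b Wba.
have [n Hn] := W_attr Wba; exists n; exact: attrn_flip.
Qed.

Definition WW a c := exists b, W a b /\ W b c.

Lemma trans_attr n s t : attrn W n s t -> forall u, W s t -> W t u ->
  exists m, attrn WW m s u.
Proof.
elim=> [n' s'|n' s' t' w1 y1 y2 hl C1 Hs nz _ IH] u Wst Wtu.
  have [m Hm] := W_attr Wtu; exists m; apply: attrn_rel Hm => a b Wab.
  by exists a; split => //; exact: W_refl.
have [hl2 [w2 [C2 Hs2]]] := W_step Wtu.
have Wy : W y1 y2 := Hs _ _ nz.
have [u' nz2] : exists u', w2 (y2, u') != 0.
  apply: NNPP => hn.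
  have t0 : tau t' y2 = 0.
    rewrite -C2.2.1 big1 // => c _; apply/eqP; apply: NNPP => h; apply: hn.
    by exists c; apply/negP.
  have := coupling_le_r y1 y2 C1; rewrite t0 => le.
  move/eqP: nz; apply; apply/le_anti; rewrite le; exact: (coupling_ge0 C1).
have Wy2 := Hs2 _ _ nz2.
have [m Hm] := IH u' Wy Wy2.
exists m.+1.
apply: (an_step (etrans hl hl2) (gluec_coupling _ _ _ _ _ C1 C2) _
          (gluec_pos _ _ _ _ _ _ _ _ C1 C2 nz nz2) Hm).
move=> a c /(gluec_support _ _ _ _ _ _ _ C1 C2) [b [n1 n2]].
by exists b; split; [exact: Hs _ _ n1 | exact: Hs2 _ _ n2].
Qed.

Lemma W_trans s t u : W s t -> W t u -> W s u.
Proof.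
move=> Wst Wtu; apply: (@sound_rb WW); last by exists t.
move=> a c [b [Wab Wbc]]; have [n Hn] := W_attr Wab.
exact: trans_attr Hn c Wab Wbc.
Qed.

Lemma main_sec : prob_bisimulation tau lab W /\
  (forall s t, W s t -> bisimilar tau lab s t).
Proof.
have PB : prob_bisimulation tau lab W.
  split; last by move=> s t; exact: W_step.
  split; first exact: W_refl.
  split; first exact: W_sym.
  exact: W_trans.
split => // s t Wst; exists W; split => //.
Qed.

End Proofs.

Theorem lemma1 (R : realType) (S L : finType) (tau : S -> S -> R) (lab : S -> L)
    (HM : is_LMC tau lab) :
  prob_bisimulation tau lab (robust_bisimilar tau lab) /\
  (forall s t, robust_bisimilar tau lab s t -> bisimilar tau lab s t).
Proof.
exact: (@main_sec R S L tau lab HM.1).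
Qed.
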